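(* Let $X$ be a Fréchet space and $(\|\cdot\|_k)_{k\ge 1}$ the associated increasing family of seminorms (i.e. $\|x\|_k\le\|x\|_{k+1}$ for all $x\in X$, $k\ge1$). Equip $X$ with the metric \[ d'_X(x,y)=\sum_{k=1}^{\infty}2^{-k}\frac{\|x-y\|_k}{1+\|x-y\|_k}. \] A linear operator $T:X\to X$ is an isometry for $d'_X$ if and only if $\|Tx\|_k=\|x\|_k$ for all $x\in X$ and all $k\in\mathbb{N}$. *)

(* Defs.v *)
From HB Require Import structures.
From mathcomp Require Import all_boot all_order all_algebra.
From mathcomp Require Import all_classical all_reals all_analysis.
Set Implicit Arguments. Unset Strict Implicit. Unset Printing Implicit Defensive.
Import Order.TTheory GRing.Theory Num.Theory numFieldNormedType.Exports.
Local Open Scope ring_scope.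

Definition seminorm (R : realType) (X : lmodType R) (p : X -> R) : Prop :=
  (forall x y : X, p (x + y) <= p x + p y) /\
  (forall (a : R) (x : X), p (a *: x) = `|a| * p x).

(* The seminorm ||.||_k (k >= 1) is represented by p (k - 1), so the k-th
   summand (k : nat, starting at 0) carries the weight 2^-(k+1). *)
Definition dprime (R : realType) (X : lmodType R) (p : nat -> X -> R)
  (x y : X) : R :=
  limn (series (fun k : nat =>
          (2 ^+ k.+1)^-1 * (p k (x - y) / (1 + p k (x - y))))).

Definition frechet_seminorms (R : realType) (X : lmodType R)
  (p : nat -> X -> R) : Prop :=
  [/\ (forall k, seminorm (p k)),
      (forall k (x : X), p k x <= p k.+1 x),
      (forall x : X, (forall k, p k x = 0) -> x = 0) &
      (forall u : nat -> X,
        (forall e : R, 0 < e -> exists N : nat, forall m n : nat,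
           (N <= m)%N -> (N <= n)%N -> dprime p (u m) (u n) < e) ->
        exists l : X, ((fun n => dprime p (u n) l) @ \oo --> (0 : R))%classic)].

Definition dprime_isometry (R : realType) (X : lmodType R)
  (p : nat -> X -> R) (T : X -> X) : Prop :=
  forall x y : X, dprime p (T x) (T y) = dprime p x y.

(* Main.v *)
Require Import Defs.
From HB Require Import structures.
From mathcomp Require Import all_boot all_order all_algebra.
From mathcomp Require Import all_classical all_reals all_analysis.
From mathcomp Require Import ring lra.
Import Order.TTheory GRing.Theory Num.Theory numFieldNormedType.Exports.
Local Open Scope ring_scope.

Section Aux.
Variable R : realType.

Definition ww (k : nat) : R := (2 ^+ k.+1)^-1.

Lemma ww_ge0 k : 0 <= ww k.
Proof. by rewrite /ww invr_ge0 exprn_ge0. Qed.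

Lemma series_ww n : series ww n = 1 - (2 ^+ n)^-1.
Proof.
elim: n => [|n IH]; first by rewrite /series /= big_geq // expr0 invr1 subrr.
move: IH; rewrite /series /= => IH; rewrite big_nat_recr //= IH /ww.
rewrite exprS; field; by rewrite expf_neq0 // pnatr_eq0.
Qed.

Lemma cvg_ww : cvgn (series ww).
Proof.
apply: nondecreasing_is_cvgn; first by apply: nondecreasing_series => n _ _; exact: ww_ge0.
exists 1 => _ [n _ <-]; rewrite series_ww lerBlDr lerDl invr_ge0 exprn_ge0 //.
Qed.

Lemma cvg_le_ww (u : nat -> R) : (forall k, 0 <= u k <= ww k) -> cvgn (series u).
Proof.
move=> h; apply: (series_le_cvg (v_ := ww)) => //.
- by move=> n; case/andP: (h n).
- exact: ww_ge0.
- by move=> n; case/andP: (h n).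
- exact: cvg_ww.
Qed.

Lemma bernoulli (x : R) n : 0 <= x -> 1 + n%:R * x <= (1 + x) ^+ n.
Proof.
move=> x0; elim: n => [|n IH]; first by rewrite mul0r addr0 expr0.
rewrite exprS -natr1.
have h1 : 0 <= n%:R * x by rewrite mulr_ge0.
nra.
Qed.

End Aux.
Arguments ww {R}.
Arguments bernoulli {R}. Arguments cvg_le_ww {R}. Arguments series_ww {R}.


Inductive hspan (K : realType) : (K -> K) -> Prop :=
| spG (t : K) : 0 <= t -> hspan K (fun s => (1 + t * s)^-1)
| spL h1 h2 (c1 c2 : K) : hspan K h1 -> hspan K h2 -> hspan K (fun s => c1 * h1 s + c2 * h2 s)
| spE h1 h2 : hspan K h1 -> (forall s, 0 <= s -> h1 s = h2 s) -> hspan K h2.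
Arguments hspan {K}.
Arguments spG {K t}.
Arguments spL {K h1 h2}.
Arguments spE {K h1 h2}.

Section Span.
Variable R : realType.
Variables (a b : nat -> R).
Hypotheses (ha : forall k, 0 <= a k) (hb : forall k, 0 <= b k).

Definition SS (c : nat -> R) (h : R -> R) := series (fun k => ww k * h (c k)).

Hypothesis base : forall t, 0 <= t ->
  limn (SS a (fun s => (1 + t * s)^-1)) = limn (SS b (fun s => (1 + t * s)^-1)).

Lemma cvg_base (c : nat -> R) t : (forall k, 0 <= c k) -> 0 <= t ->
  cvgn (SS c (fun s => (1 + t * s)^-1)).
Proof.
move=> hc t0; apply: cvg_le_ww => k.
have hp : 0 < 1 + t * c k by rewrite ltr_pwDl // mulr_ge0.
rewrite mulr_ge0 ?ww_ge0 ?invr_ge0 ?(ltW hp) //=.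
rewrite ler_piMr ?ww_ge0 // invf_le1 //.
by rewrite lerDl mulr_ge0.
Qed.

Lemma span_ok h : hspan h ->
  [/\ cvgn (SS a h), cvgn (SS b h) & limn (SS a h) = limn (SS b h)].
Proof.
elim => {h}.
- move=> t t0; split; [exact: cvg_base|exact: cvg_base|exact: base].
- move=> h1 h2 c1 c2 _ [ca1 cb1 e1] _ [ca2 cb2 e2].
  have E : forall c, SS c (fun s => c1 * h1 s + c2 * h2 s) =
      c1 *: SS c h1 + c2 *: SS c h2.
    move=> c; rewrite -!seriesZ -seriesD /SS; congr series.
    by apply/funext => k /=; rewrite !fctE /=; rewrite mulrDr; congr (_ + _); apply: mulrCA.
  rewrite !E; split.
  + by rewrite -!seriesZ -seriesD; apply: is_cvg_seriesD; apply: is_cvg_seriesZ.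
  + by rewrite -!seriesZ -seriesD; apply: is_cvg_seriesD; apply: is_cvg_seriesZ.
  + rewrite -!seriesZ -!seriesD !lim_seriesD; try by apply: is_cvg_seriesZ.
    by rewrite !lim_seriesZ // e1 e2.
- move=> g1 g2 _ [ca cb e] eq.
  have E : forall c, (forall k, 0 <= c k) -> SS c g1 = SS c g2.
    by move=> c hc; rewrite /SS; congr series; apply/funext => k; rewrite eq.
  by rewrite -!E.
Qed.

End Span.
Arguments SS {R}. Arguments span_ok {R a b}. Arguments cvg_base {R}.


Section QQ.
Variable R : realType.

Definition Q (T : R) (j : nat) (s : R) := \prod_(i < j) (1 + (T + i%:R) * s)^-1.

Lemma QS T j s : Q T j.+1 s = Q T j s * (1 + (T + j%:R) * s)^-1.
Proof. by rewrite /Q big_ord_recr. Qed.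

Lemma Q_span T (T0 : 0 <= T) j : forall t, 0 <= t ->
  (forall i, (i < j)%N -> t != T + i%:R) -> hspan (fun s => Q T j s * (1 + t * s)^-1).
Proof.
elim: j => [|j IH] t t0 ht.
  by apply: (spE (spG t0)) => s _; rewrite /Q big_ord0 mul1r.
set u := T + j%:R.
have u0 : 0 <= u by rewrite addr_ge0.
have tu : t - u != 0 by rewrite subr_eq0 ht.
have h1 := IH t t0 (fun i hi => ht i (ltnW hi)).
have h2 : hspan (fun s => Q T j s * (1 + u * s)^-1).
  apply: IH => // i hi; rewrite /u (inj_eq (addrI T)) eqr_nat.
  by rewrite eq_sym neq_ltn hi.
apply: (spE (spL (t / (t - u)) (- (u / (t - u))) h1 h2)) => s s0.
rewrite QS.
have p1 : 1 + t * s != 0 by rewrite gt_eqF // ltr_pwDl // mulr_ge0.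
have p2 : 1 + u * s != 0 by rewrite gt_eqF // ltr_pwDl // mulr_ge0.
rewrite -/u; field.
by rewrite tu p1 p2.
Qed.

Lemma Q_span0 T (T0 : 0 <= T) j : hspan (Q T j).
Proof.
case: j => [|j].
  by apply: (spE (spG (lexx (0:R)))) => s _; rewrite /Q big_ord0 mul0r addr0 invr1.
apply: (spE (@Q_span T T0 j (T + j%:R) _ _)).
all: try (by move=> s _; rewrite QS); try (by rewrite addr_ge0).
by move=> i hi; rewrite (inj_eq (addrI T)) eqr_nat neq_ltn hi orbT.
Qed.

Lemma Q_pos T j s : 0 <= T -> 0 <= s -> 0 < Q T j s.
Proof.
move=> T0 s0; rewrite /Q; apply: prodr_gt0 => i _.
by rewrite invr_gt0 ltr_pwDl // mulr_ge0 // addr_ge0.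
Qed.

Lemma Q_anti T j s s' : 0 <= T -> 0 <= s -> s <= s' -> Q T j s' <= Q T j s.
Proof.
move=> T0 s0 ss; elim: j => [|j IH]; first by rewrite /Q !big_ord0.
rewrite !QS; apply: ler_pM.
- exact: ltW (Q_pos _ _ _ T0 (le_trans s0 ss)).
- have u0 : 0 <= T + j%:R by rewrite addr_ge0.
  have s0' : 0 <= s' by exact: le_trans s0 ss.
  have : 0 < 1 + (T + j%:R) * s' by rewrite ltr_pwDl // mulr_ge0.
  by rewrite -invr_gt0 => /ltW.
- exact: IH.
- have u0 : 0 <= T + j%:R by rewrite addr_ge0.
  rewrite lef_pV2 ?posrE ?ltr_pwDl ?mulr_ge0 ?(le_trans s0 ss) //.
  by rewrite lerD2l ler_wpM2l.
Qed.

Lemma Q_ratio (a b : R) j : 0 <= a -> a < b ->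
  ((2 * b) / (a + b)) ^+ j * Q b^-1 j b <= Q b^-1 j a.
Proof.
move=> a0 ab.
have b0 : 0 < b by apply: le_lt_trans ab.
have ab0 : 0 < a + b by rewrite ltr_pwDr.
have bi0 : 0 <= b^-1 by rewrite invr_ge0 ltW.
set rho := (2 * b) / (a + b).
have rho0 : 0 <= rho by apply: divr_ge0; [apply: mulr_ge0 => //; exact: ltW | exact: ltW].
elim: j => [|j IH]; first by rewrite expr0 mul1r /Q !big_ord0.
rewrite !QS exprS.
set u := b^-1 + j%:R.
have u0 : 0 <= u by rewrite /u addr_ge0.
have u1 : 1 <= u * b.
  by rewrite /u mulrDl mulVf ?gt_eqF // lerDl mulr_ge0 // ltW.
have pa : 0 < 1 + u * a by rewrite ltr_pwDl // mulr_ge0.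
have pb : 0 < 1 + u * b by rewrite ltr_pwDl // mulr_ge0 // ltW.
have key : rho * (1 + u * b)^-1 <= (1 + u * a)^-1.
  rewrite -[rho * _]/(rho / (1 + u * b)) ler_pdivrMr // mulrC.
  rewrite ler_pdivlMr // /rho mulrAC ler_pdivrMr //.
  nra.
rewrite [X in X <= _](_ : _ = (rho ^+ j * Q b^-1 j b) * (rho * (1 + u * b)^-1)); last by ring.
apply: ler_pM => //.
- by rewrite mulr_ge0 ?exprn_ge0 // ltW // Q_pos // ltW.
- by rewrite mulr_ge0 // invr_ge0 ltW.
Qed.

End QQ.
Arguments Q {R}.
Arguments Q_span0 {R}. Arguments Q_pos {R}. Arguments Q_anti {R}. Arguments Q_ratio {R}. Arguments QS {R}. Arguments Q_span {R}.


Section Core.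
Variable R : realType.

Lemma exists_pow (r : R) : 1 < r -> exists j : nat, 2 < r ^+ j.
Proof.
move=> r1; set x := r - 1.
have x0 : 0 < x by rewrite subr_gt0.
have xi : 0 <= x^-1 by rewrite invr_ge0 ltW.
have := archi_boundP xi.
set j := Num.bound _ => hj.
exists j.
have hb := @bernoulli R x j (ltW x0).
have e1 : 1 + x = r by rewrite /x addrC subrK.
rewrite e1 in hb.
apply: lt_le_trans hb.
have : 1 < j%:R * x by rewrite -ltr_pdivrMr // div1r.
lra.
Qed.

Lemma core (a b : nat -> R) (ha : forall k, 0 <= a k) (hb : forall k, 0 <= b k)
  (bnd : forall k, b k <= b k.+1)
  (base : forall t, 0 <= t ->
    limn (SS a (fun s => (1 + t * s)^-1)) = limn (SS b (fun s => (1 + t * s)^-1)))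
  (m : nat) (pre : forall k, (k < m)%N -> a k = b k) (lt : a m < b m) : False.
Proof.
have b0 : 0 < b m by apply: le_lt_trans lt.
have T0 : 0 <= (b m)^-1 by rewrite invr_ge0 ltW.
set rho := (2 * b m) / (a m + b m).
have rho1 : 1 < rho.
  by rewrite /rho ltr_pdivlMr ?mul1r ?ltr_pwDr // mulr_natl mulr2n ltrD2r.
have [j hj] := exists_pow _ rho1.
set h := Q (b m)^-1 j.
have [ca cb e] := span_ok ha hb base _ (Q_span0 _ T0 j).
have hge : forall s, 0 <= s -> 0 <= h s by move=> s s0; apply: ltW; apply: Q_pos.
have nd : forall c, (forall k, 0 <= c k) -> nondecreasing_seq (SS c h).
  move=> c hc; apply: nondecreasing_series => n _ _.
  by rewrite mulr_ge0 ?ww_ge0 ?hge.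
have low : series (fun k => ww k * h (a k)) m.+1 <= limn (SS a h).
  exact: (nondecreasing_cvgn_le (nd _ ha) ca).
have bmono : nondecreasing_seq b by apply/nondecreasing_seqP.
set P := series (fun k => ww k * h (b k)) m.
have up : limn (SS b h) <= P + h (b m) * (2 ^+ m)^-1.
  apply: limr_le => //; near=> n.
  have : SS b h n <= SS b h (n + m)%N by apply: (nd _ hb); rewrite leq_addr.
  move/le_trans; apply.
  rewrite /SS series_addn -/P lerD2l.
  apply: (@le_trans _ _ (\sum_(m <= k < n + m) ww k * h (b m))).
    apply: ler_sum_nat => k /andP[mk _].
    apply: ler_wpM2l; first exact: ww_ge0.
    by apply: Q_anti => //; apply: bmono.
  rewrite -big_distrl /= mulrC; apply: ler_wpM2l; first exact: hge (ltW b0).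
  have E := series_addn (@ww R) m n.
  rewrite !series_ww in E.
  have : 0 <= (2 ^+ (n + m))^-1 :> R by rewrite invr_ge0 exprn_ge0.
  lra.
have pe : series (fun k => ww k * h (a k)) m = P.
  rewrite /P /series /=; apply: eq_big_nat => k /andP[_ km].
  by rewrite pre.
have lowe : series (fun k => ww k * h (a k)) m.+1 = P + ww m * h (a m).
  by rewrite -pe /series /= big_nat_recr.
rewrite lowe in low.
have rat := Q_ratio (a m) (b m) j (ha m) lt.
have hBpos : 0 < h (b m) by apply: Q_pos => //; exact: ltW.
have q0 : 0 < (2 ^+ m)^-1 :> R by rewrite invr_gt0 exprn_gt0.
have wm : ww m = (2 ^+ m)^-1 / 2 :> R.
  rewrite /ww exprS invfM mulrC //.
have ee : limn (SS a h) = limn (SS b h) by exact: e.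
move: low up rat hj; rewrite ee wm -/rho -/h.
set q := (2 ^+ m)^-1; set X := h (a m); set Y := h (b m); set r := rho ^+ j.
move=> low up rat hj.
have : q / 2 * X <= q * Y by lra.
move=> hh.
have : 2 * Y < r * Y by rewrite ltr_pM2r.
have : X <= 2 * Y.
  have : q * X <= q * (2 * Y) by nra.
  by rewrite ler_pM2l.
lra.
Unshelve. all: by end_near.
Qed.
End Core.
Arguments core {R a b}.


Lemma conv (R : realType) (c : nat -> R) t (hc : forall k, 0 <= c k) (t0 : 0 <= t) :
  limn (SS c (fun s => (1 + t * s)^-1)) =
  limn (series ww) - limn (series (fun k => ww k * (t * c k / (1 + t * c k)))).
Proof.
have hp : forall k, 0 < 1 + t * c k by move=> k; rewrite ltr_pwDl // mulr_ge0.
have cF : cvgn (series (fun k => ww k * (t * c k / (1 + t * c k)))).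
  apply: cvg_le_ww => k; apply/andP; split.
    by rewrite mulr_ge0 ?ww_ge0 // divr_ge0 ?mulr_ge0 // ltW.
  rewrite ler_piMr ?ww_ge0 // ler_pdivrMr // mul1r lerDr //.
rewrite -lim_seriesB //; last exact: cvg_ww.
rewrite /SS; congr (limn _); congr (series _); apply/funext => k /=.
rewrite !fctE.
have := hp k; move=> /gt_eqF hk.
field; by rewrite hk.
Qed.

Lemma seminorm_facts (R : realType) (X : lmodType R) (q : X -> R) :
  seminorm q -> q 0 = 0 /\ (forall y, 0 <= q y).
Proof.
case=> sa hom.
have q0 : q 0 = 0 by rewrite -(scale0r (0 : X)) hom normr0 mul0r.
split => // y.
have := sa y (- y); rewrite subrr q0.
have -> : q (- y) = q y by rewrite -scaleN1r hom normrN normr1 mul1r.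
lra.
Qed.

Theorem lemma1p2 (R : realType) (X : lmodType R) (p : nat -> X -> R)
  (hX : frechet_seminorms p) (T : {linear X -> X}) :
  dprime_isometry p T <-> (forall (x : X) (k : nat), p k (T x) = p k x).
Proof.
split; last first.
  move=> H x y; rewrite /dprime; congr (limn _); congr (series _); apply/funext => k.
  by rewrite -linearB H.
case: hX => sn mono _ _.
have pge : forall k y, 0 <= p k y by move=> k y; case: (seminorm_facts _ _ _ (sn k)).
have pZ : forall k (t : R) y, 0 <= t -> p k (t *: y) = t * p k y.
  by move=> k t y t0; case: (sn k) => _ ->; rewrite ger0_norm.
move=> iso x k0; apply/eqP; apply/negPn/negP => hne.
pose a k := p k (T x); pose b k := p k x.
have ha : forall k, 0 <= a k by move=> k; exact: pge.
have hb : forall k, 0 <= b k by move=> k; exact: pge.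
have base : forall t, 0 <= t ->
    limn (SS a (fun s => (1 + t * s)^-1)) = limn (SS b (fun s => (1 + t * s)^-1)).
  move=> t t0; rewrite !conv //; congr (_ - _).
  have := iso (t *: x) 0; rewrite /dprime linear0 linearZ !subr0 => E.
  rewrite /a /b.
  have e1 : forall y, (fun k => ww k * (t * p k y / (1 + t * p k y))) =
     (fun k => 2 ^- k.+1 * (p k (t *: y) / (1 + p k (t *: y)))).
    by move=> y; apply/funext => k; rewrite pZ.
  rewrite !e1; exact: E.
have ex : exists k, a k != b k by exists k0.
case: (ex_minnP ex) => m hm hmin.
have pre : forall i, (i < m)%N -> a i = b i.
  move=> i im; apply/eqP; apply/negPn/negP => hi.
  by have := hmin i hi; rewrite leqNgt im.
rewrite neq_lt in hm; case/orP: hm => hlt.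
- exact: (core ha hb (fun k => mono k x) base _ pre hlt).
- apply: (core hb ha (fun k => mono k (T x)) _ _ _ hlt).
    by move=> t t0; rewrite base.
  by move=> i im; rewrite pre.
Qed.
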